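(* Let $\gamma > 1$ and let $I$ be a $\gamma$-stable instance of the metric Steiner tree problem with optimal Steiner tree $\mathrm{OPT}$. Suppose $ab$ and $bc$ are two distinct edges of $\mathrm{OPT}$. Then: (1) $w_{ac} > \gamma \cdot \max\{w_{ab}, w_{bc}\}$; (2) $\frac{2}{\gamma} w_{ac} > w_{ab} + w_{bc}$; (3) $(\gamma - 1) w_{ab} < w_{bc}$ and $(\gamma - 1) w_{bc} < w_{ab}$.
   Context: An instance of the metric Steiner tree problem consists of a finite set $V$ of points of a metric space with metric $d$, a set $T \subseteq V$ of terminals, and the complete graph on $V$ with edge weights $w_{uv} = d(u,v)$. Points of $V \setminus T$ are Steiner points. A Steiner tree is a tree in this complete graph whose vertex set contains all of $T$; its weight is the sum of its edge weights. For $\gamma > 1$, the instance is $\gamma$-stable if it has a minimum-weight Steiner tree $\mathrm{OPT}$ such that for every $w' : V \times V \to \mathbb{R}_{\ge 0}$ with $w_{uv} \le w'_{uv} \le \gamma w_{uv}$ for all $u,v$, every minimum-weight Steiner tree with respect to $w'$ equals $\mathrm{OPT}$. *)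

(* Defs.v *)
From HB Require Import structures.
From mathcomp Require Import all_boot all_order all_algebra.
Set Implicit Arguments. Unset Strict Implicit. Unset Printing Implicit Defensive.
Import Order.TTheory GRing.Theory Num.Theory.
Local Open Scope ring_scope.

Definition is_metric (R : realFieldType) (V : finType) (d : V -> V -> R) : Prop :=
  [/\ forall x y, d x y = 0 <-> x = y,
      forall x y, d x y = d y x
    & forall x y z, d x z <= d x y + d y z].

(* A tree in the complete graph on V: a vertex set S together with its edge
   set, represented as a symmetric irreflexive set of ordered pairs
   (each undirected edge uv appears as (u,v) and (v,u)). *)
Definition graph (V : finType) := ({set V} * {set V * V})%type.

Definition is_tree (V : finType) (t : graph V) : Prop :=
  let S := t.1 in let E := t.2 in
  [/\ S != set0,
      (forall p, p \in E -> (p.1 \in S) && (p.2 \in S)),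
      (forall p, p \in E -> p.1 != p.2) /\
      (forall u v, (u, v) \in E -> (v, u) \in E),
      (forall x y, x \in S -> y \in S ->
         connect (fun u v : V => (u, v) \in E) x y)
    & #|E| = ((#|S| - 1).*2)%N].

Definition is_steiner_tree (V : finType) (T : {set V}) (t : graph V) : Prop :=
  is_tree t /\ T \subset t.1.

(* Weight of t w.r.t. edge weights f: each undirected edge is counted via both
   orientations, hence the factor 1/2. *)
Definition tree_weight (R : realFieldType) (V : finType) (f : V -> V -> R)
  (t : graph V) : R :=
  (\sum_(p in t.2) f p.1 p.2) / 2%:R.

Definition is_min_steiner_tree (R : realFieldType) (V : finType)
  (f : V -> V -> R) (T : {set V}) (t : graph V) : Prop :=
  is_steiner_tree T t /\
  forall t', is_steiner_tree T t' -> tree_weight f t <= tree_weight f t'.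

Definition stable_with (R : realFieldType) (V : finType) (d : V -> V -> R)
  (T : {set V}) (gamma : R) (OPT : graph V) : Prop :=
  is_min_steiner_tree d T OPT /\
  forall w' : V -> V -> R,
    (forall u v, d u v <= w' u v <= gamma * d u v) ->
    forall t, is_min_steiner_tree w' T t -> t = OPT.

(* Main.v *)
Require Import Defs.
From HB Require Import structures.
From mathcomp Require Import all_boot all_order all_algebra.
From mathcomp Require Import zify ring lra.
From Stdlib Require Import Classical_Prop.
Import Order.TTheory GRing.Theory Num.Theory.

Section G.

Variable V : finType.
Implicit Types (E : {set V * V}) (X S : {set V}).

Lemma exit_edge E X r y : r \in X -> y \notin X ->
  connect (fun u v : V => (u, v) \in E) r y ->
  exists u v, [/\ (u, v) \in E, u \in X & v \notin X].
Proof.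
move=> rX yX.
case: (boolP [exists u, exists v, ((u, v) \in E) && (u \in X) && (v \notin X)]).
  by move/existsP=> [u /existsP [v /andP[/andP[h1 h2] h3]]]; exists u, v.
rewrite negb_exists => /forallP H /connectP [p pth ylast].
suff : last r p \in X by rewrite -ylast (negbTE yX).
elim: p r rX pth {ylast} => [|v p IH] r rX //= /andP[ruv pth].
apply: IH pth.
move: (H r); rewrite negb_exists => /forallP /(_ v).
by rewrite ruv rX /= negbK.
Qed.

Definition inside E X := [set p in E | (p.1 \in X) && (p.2 \in X)].

Lemma grow E S r :
  (forall u v, (u, v) \in E -> (v, u) \in E) ->
  (forall p, p \in E -> (p.1 \in S) && (p.2 \in S)) ->
  (forall x y, x \in S -> y \in S -> connect (fun u v : V => (u, v) \in E) x y) ->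
  r \in S ->
  forall k, (k < #|S|)%N -> exists X, [/\ X \subset S, r \in X, #|X| = k.+1
     & ((#|X| - 1).*2 <= #|inside E X|)%N].
Proof.
move=> Esym Ein Econ rS; elim=> [|k IH] ltk.
  exists [set r]; split => //; first by rewrite sub1set.
  - by rewrite inE.
  - by rewrite cards1.
  - by rewrite cards1.
have [X [XS rX cX cE]] := IH (ltnW ltk).
have : ~~ (S \subset X).
  by apply/negP => /subset_leq_card; rewrite cX; move: ltk; move: (#|S|) => n; clear; lia.
case/subsetPn => y yS yX.
have [u [v [uvE uX vX]]] := @exit_edge E X r y rX yX (Econ _ _ rS yS).
have vS : v \in S by have := Ein _ uvE; case/andP.
exists (v |: X); split.
- by rewrite subUset sub1set vS XS.
- by rewrite !inE rX orbT.
- by rewrite cardsU1 vX cX.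
have sub : (u, v) |: ((v, u) |: inside E X) \subset inside E (v |: X).
  apply/subsetP => p; rewrite !inE => /orP [/eqP -> | /orP [/eqP -> | /andP [pE /andP[p1 p2]]]] /=.
  - by rewrite uvE eqxx uX orbT.
  - by rewrite Esym // eqxx uX orbT.
  - by rewrite pE p1 p2 !orbT.
have uv : u != v by apply: contraNneq vX => <-.
have h1 : (v, u) \notin inside E X by rewrite !inE /= (negbTE vX) andbF.
have h2 : (u, v) \notin (v, u) |: inside E X.
  by rewrite !inE /= xpair_eqE (negbTE vX) !andbF (negbTE uv).
have := subset_leq_card sub.
have e1 : #|(u, v) |: ((v, u) |: inside E X)| = (#|inside E X|).+2.
  by rewrite cardsU1 h2 cardsU1 h1.
have e2 : #|v |: X| = (#|X|).+1 by rewrite cardsU1 vX.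
rewrite e1 e2.
idtac.
move: cE cX; rewrite -!muln2. set i := #|inside E X|. set j := #|inside E (v |: X)|. lia.
Qed.

Lemma count_lb E S :
  S != set0 ->
  (forall u v, (u, v) \in E -> (v, u) \in E) ->
  (forall p, p \in E -> (p.1 \in S) && (p.2 \in S)) ->
  (forall x y, x \in S -> y \in S -> connect (fun u v : V => (u, v) \in E) x y) ->
  ((#|S| - 1).*2 <= #|E|)%N.
Proof.
case/set0Pn => r rS Esym Ein Econ.
have lt : (#|S|.-1 < #|S|)%N by rewrite prednK ?card_gt0; [|apply/set0Pn; exists r].
have [X [XS rX cX cE]] := @grow E S r Esym Ein Econ rS _ lt.
have : (#|inside E X| <= #|E|)%N.
  by apply: subset_leq_card; apply/subsetP => p; rewrite inE => /andP[].
have : (0 < #|S|)%N by apply/card_gt0P; exists r.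
idtac.
move: cE; rewrite -!muln2; lia.
Qed.


Lemma reroute (E F : {set V * V}) a b c :
  (a, c) \in F -> (c, a) \in F -> (b, c) \in F -> (c, b) \in F ->
  (forall u v, (u, v) \in E -> [|| (u, v) \in F, (u, v) == (a, b) | (u, v) == (b, a)]) ->
  forall x y, connect (fun u v : V => (u, v) \in E) x y ->
              connect (fun u v : V => (u, v) \in F) x y.
Proof.
move=> acF caF bcF cbF H x y; apply: connect_sub => u v /H /or3P [h|/eqP[-> ->]|/eqP[-> ->]].
- exact: connect1.
- exact: connect_trans (connect1 acF) (connect1 cbF).
- exact: connect_trans (connect1 bcF) (connect1 caF).
Qed.
End G.

Local Open Scope ring_scope.

Lemma exists_min (R : realFieldType) (U : finType) (P : U -> Prop) (f : U -> R) x0 :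
  P x0 -> exists x, P x /\ forall y, P y -> f x <= f y.
Proof.
move=> P0.
suff H : forall s : seq U, (exists x, x \in s /\ P x) ->
    exists x, P x /\ forall y, y \in s -> P y -> f x <= f y.
  have e : forall y : U, y \in enum U by move=> y; rewrite enumT mem_index_enum.
  have [x [Px Hx]] := H (enum U) (ex_intro _ x0 (conj (e x0) P0)).
  by exists x; split=> // y Py; apply: Hx.
elim => [|y0 s IH] [x [xs Px]]; first by [].
case: (classic (exists x, x \in s /\ P x)) => [ex|nex].
  have [m [Pm Hm]] := IH ex.
  case: (classic (P y0)) => Py0.
    case: (leP (f m) (f y0)) => h.
      by exists m; split=> // y; rewrite inE => /orP[/eqP->|ys] Py //; apply: Hm.
    exists y0; split => // y; rewrite inE => /orP[/eqP->|ys] Py //.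
    exact: le_trans (ltW h) (Hm _ ys Py).
  by exists m; split=> // y; rewrite inE => /orP[/eqP->|ys] Py //; apply: Hm.
exists y0.
have xy0 : x = y0.
  move: xs; rewrite inE => /orP[/eqP //|xs]; exfalso; apply: nex; by exists x.
split; first by rewrite -xy0.
move=> y; rewrite inE => /orP[/eqP->|ys] Py //.
exfalso; apply: nex; by exists y.
Qed.

Lemma key (R : realFieldType) (V : finType) (d : V -> V -> R)
  (T : {set V}) (gamma : R) (OPT : graph V) :
  is_metric d -> 1 < gamma -> stable_with d T gamma OPT ->
  forall a b c : V,
    (a, b) \in OPT.2 -> (b, c) \in OPT.2 -> a != c -> gamma * d a b < d a c.
Proof.
case: OPT => S E [d0 dsym dtri] g1 [[[tree TS] OPTmin] stab] a b c /= abE bcE ac.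
case: tree => /= Sn0 Ein [Eirr Esym] Econ cardE.
have ab : a != b := Eirr _ abE.
have bc : b != c := Eirr _ bcE.
have baE := Esym _ _ abE.
have cbE := Esym _ _ bcE.
have /andP[/= aS bS] := Ein _ abE.
have /andP[/= _ cS] := Ein _ bcE.
have eab : (a == b) = false by apply/negbTE.
have eba : (b == a) = false by rewrite eq_sym; apply/negbTE.
have ebc : (b == c) = false by apply/negbTE.
have ecb : (c == b) = false by rewrite eq_sym; apply/negbTE.
have eac : (a == c) = false by apply/negbTE.
have eca : (c == a) = false by rewrite eq_sym; apply/negbTE.
set E2 := (E :\ (a, b)) :\ (b, a).
have E2E : forall p, p \in E2 -> p \in E by move=> p; rewrite !inE => /and3P[].
have E2sym : forall u v, (u, v) \in E2 -> (v, u) \in E2.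
  move=> u v; rewrite !inE !xpair_eqE => /and3P[h1 h2 h].
  by rewrite (andbC (v == b)) (andbC (v == a)) h1 h2 Esym.
have E2in : forall p, p \in E2 -> (p.1 \in S) && (p.2 \in S).
  by move=> p /E2E /Ein.
have bcE2 : (b, c) \in E2 by rewrite !inE !xpair_eqE ?eab ?ebc ?eba ?ecb ?eca ?eac ?bcE ?andbF.
have cbE2 : (c, b) \in E2 by rewrite !inE !xpair_eqE ?eab ?ebc ?eba ?ecb ?eca ?eac ?cbE ?andbF.
have cover : forall F : {set V * V}, E2 \subset F ->
    forall u v, (u, v) \in E -> [|| (u, v) \in F, (u, v) == (a, b) | (u, v) == (b, a)].
  move=> F /subsetP sF u v uvE.
  case: (boolP ((u, v) \in E2)) => h; first by rewrite sF.
  move: h; rewrite !inE uvE andbT negb_and !negbK => /orP[->|->]; by rewrite !orbT.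
have cardE2 : #|E| = (#|E2|).+2.
  rewrite (cardsD1 (a, b) E) abE (cardsD1 (b, a) (E :\ (a, b))).
  by rewrite !inE !xpair_eqE eba baE.
have acE : (a, c) \notin E.
  apply/negP => acE.
  have caE := Esym _ _ acE.
  have acE2 : (a, c) \in E2 by rewrite !inE !xpair_eqE ?eab ?ebc ?eba ?ecb ?eca ?eac ?acE ?andbF.
  have caE2 : (c, a) \in E2 by rewrite !inE !xpair_eqE ?eab ?ebc ?eba ?ecb ?eca ?eac ?caE ?andbF.
  have conE2 : forall x y, x \in S -> y \in S ->
      connect (fun u v : V => (u, v) \in E2) x y.
    move=> x y xS yS.
    exact: (@reroute _ E E2 a b c acE2 caE2 bcE2 cbE2 (cover E2 (subxx _)) x y (Econ x y xS yS)).
  have := @count_lb _ E2 S Sn0 E2sym E2in conE2.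
  rewrite -cardE cardE2 => h.
  by have := ltn_trans (ltnSn _) h; rewrite ltnn.
have caE : (c, a) \notin E by apply: contra acE => /Esym.
set E' := (a, c) |: ((c, a) |: E2).
have acE' : (a, c) \in E' by rewrite !inE eqxx.
have caE' : (c, a) \in E' by rewrite !inE eqxx orbT.
have E2E' : E2 \subset E' by apply/subsetP => p pE2; rewrite !in_setU1 pE2 !orbT.
have bcE' : (b, c) \in E' by apply: (subsetP E2E').
have cbE' : (c, b) \in E' by apply: (subsetP E2E').
have tree' : is_steiner_tree T (S, E').
  split=> //; split=> //=.
  - move=> p; rewrite !in_setU1 => /orP[/eqP->|/orP[/eqP->|/E2in //]] /=.
      by rewrite aS cS.
    by rewrite aS cS.
  - split.
      move=> p; rewrite !in_setU1 => /orP[/eqP->|/orP[/eqP->|/E2E /Eirr //]] /=.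
        by rewrite eac.
      by rewrite eca.
    move=> u v; rewrite !in_setU1 !xpair_eqE => /orP[/andP[/eqP-> /eqP->]|/orP[/andP[/eqP-> /eqP->]|/E2sym ->]].
    + by rewrite !eqxx orbT.
    + by rewrite !eqxx.
    + by rewrite !orbT.
  - move=> x y xS yS.
    exact: (@reroute _ E E' a b c acE' caE' bcE' cbE' (cover E' E2E') x y (Econ x y xS yS)).
  - have h1 : (c, a) \notin E2 by apply: contra caE; apply: E2E.
    have h2 : (a, c) \notin (c, a) |: E2.
      by rewrite in_setU1 xpair_eqE eac /=; apply: contra (@E2E (a, c)) acE.
    rewrite cardsU1 h2 cardsU1 h1 -cardE cardE2 /=.
    by rewrite add1n add1n.
have d_ge0 : forall x y, 0 <= d x y.
  move=> x y; have := dtri x y x; rewrite (dsym y x) (proj2 (d0 x x) erefl).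
  lra.
pose w' := fun u v => if ((u, v) == (a, b)) || ((u, v) == (b, a)) then gamma * d u v else d u v.
have wb : forall u v, d u v <= w' u v <= gamma * d u v.
  move=> u v; have := d_ge0 u v; rewrite /w'; case: ifP => _ h; apply/andP; split; nra.
have OPTst : is_steiner_tree T (S, E) by split=> //; split=> //.
have [t0 [t0T t0min]] := @exists_min R _ (is_steiner_tree T) (tree_weight w') (S, E) OPTst.
have t0E : t0 = (S, E) by apply: (stab w' wb t0); split.
subst t0.
rewrite ltNge; apply/negP => hle.
have wle : tree_weight w' (S, E') <= tree_weight w' (S, E).
  rewrite /tree_weight /=; apply: ler_wpM2r; first by rewrite invr_ge0 ler0n.
  have baE1 : (b, a) \in E :\ (a, b) by rewrite !inE xpair_eqE eba baE.
  rewrite (big_setD1 (a, b) abE) (big_setD1 (b, a) baE1) -/E2.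
  rewrite big_setU1 /=; last by rewrite in_setU1 xpair_eqE eac /=; apply: contra (@E2E (a, c)) acE.
  rewrite big_setU1 /=; last by apply: contra caE; apply: E2E.
  have -> : w' a b = gamma * d a b by rewrite /w' eqxx.
  have -> : w' b a = gamma * d b a by rewrite /w' !xpair_eqE ?eqxx ?eab ?eba ?ebc ?ecb ?eac ?eca ?andbF ?orbT /=.
  have -> : w' a c = d a c by rewrite /w' !xpair_eqE ?eqxx ?eab ?eba ?ebc ?ecb ?eac ?eca ?andbF ?orbT /=.
  have -> : w' c a = d c a by rewrite /w' !xpair_eqE ?eqxx ?eab ?eba ?ebc ?ecb ?eac ?eca ?andbF ?orbT /=.
  rewrite (dsym c a) (dsym b a).
  set s := \sum_(i in E2) _.
  lra.
have : (S, E') = (S, E).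
  apply: (stab w' wb); split => // t ht.
  exact: le_trans wle (t0min t ht).
case=> eE.
have : (a, b) \in E' by rewrite eE.
by rewrite !inE !xpair_eqE ?eab ?ebc ?eba ?ecb ?eca ?eac ?eqxx ?andbF.
Qed.

Theorem mainTheorem6 (R : realFieldType) (V : finType) (d : V -> V -> R)
  (T : {set V}) (gamma : R) (OPT : graph V) :
  is_metric d -> 1 < gamma -> stable_with d T gamma OPT ->
  forall a b c : V,
    (a, b) \in OPT.2 -> (b, c) \in OPT.2 -> a != c ->
    [/\ d a c > gamma * Num.max (d a b) (d b c),
        (2%:R / gamma) * d a c > d a b + d b c,
        (gamma - 1) * d a b < d b c
      & (gamma - 1) * d b c < d a b].
Proof.
move=> dm g1 st a b c abE bcE ac.
have k1 := @key R V d T gamma OPT dm g1 st a b c abE bcE ac.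
have [_ dsym dtri] := dm.
have [[[[_ _ [_ Esym] _ _] _] _] _] := st.
have ca : c != a by rewrite eq_sym.
have k2 := @key R V d T gamma OPT dm g1 st c b a (Esym _ _ bcE) (Esym _ _ abE) ca.
rewrite (dsym c a) (dsym c b) in k2.
have t1 := dtri a b c.
have g0 : 0 < gamma by apply: lt_trans g1; apply: ltr01.
split.
- rewrite maxr_pMr ?ltW // gt_max k1 /=; lra.
- have -> : 2%:R / gamma * d a c = (2%:R * d a c) / gamma by rewrite mulrAC.
  rewrite ltr_pdivlMr //. lra.
- lra.
- have t2 := dtri c b a. rewrite (dsym c b) (dsym b a) (dsym c a) in t2. lra.
Qed.
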